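(* Let $\mathsf{X} = \langle \mathsf{E}, \mathsf{po}, \mathsf{rf}, \mathsf{mo}\rangle$ be a 1-Writer execution graph. Then for $\mathcal{M} \in \{\mathsf{SRA}, \mathsf{RA}\}$, $\mathsf{X}$ is consistent with $\mathcal{M}$ if and only if $\mathsf{mo}$ agrees with $\mathsf{po}$ and $\mathsf{X}$ is consistent with $\mathsf{WRA}$.
   Context: An event is either a read $\mathtt{r}(x,v)$ or a write $\mathtt{w}(x,v)$ of a value $v$ to/from a shared variable $x$; every event belongs to a thread. An execution graph $\mathsf{X}=\langle \mathsf{E},\mathsf{po},\mathsf{rf},\mathsf{mo}\rangle$ consists of a finite set of events $\mathsf{E}$; the program order $\mathsf{po}$, a strict partial order that totally orders the events of each thread (and relates no events of distinct threads); a reads-from relation $\mathsf{rf}$ relating writes to reads, such that every read $r$ is related to exactly one write $\mathsf{rf}^{-1}(r)$ with the same variable and value; and a modification order $\mathsf{mo}=\bigcup_x \mathsf{mo}_x$, where $\mathsf{mo}_x$ is a strict total order on the writes to $x$. $\mathsf{X}$ is 1-Writer if for every variable $x$ at most one thread contains writes to $x$. $\mathsf{mo}$ agrees with $\mathsf{po}$ if $w\,\mathsf{mo}\,w'$ implies $w\,\mathsf{po}\,w'$. The happens-before relation is $\mathsf{hb}=(\mathsf{po}\cup\mathsf{rf})^+$. Axioms: porf-acyclicity: $\mathsf{po}\cup\mathsf{rf}$ is acyclic. Write-coherence: no writes $w,w'$ to the same $x$ with $w\,\mathsf{mo}_x\,w'$ and $w'\,\mathsf{hb}\,w$. Strong-write-coherence: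 $\mathsf{hb}\cup\mathsf{mo}$ is acyclic. Read-coherence: no read $r$ of $x$ and writes $w,w'$ of $x$ with $w\,\mathsf{rf}\,r$, $w\,\mathsf{mo}_x\,w'$, $w'\,\mathsf{hb}\,r$. Weak-read-coherence: no read $r$ of $x$ and writes $w,w'$ of $x$ with $w\,\mathsf{rf}\,r$, $w\,\mathsf{hb}\,w'$, $w'\,\mathsf{hb}\,r$. Consistency with $\mathsf{WRA}$: porf-acyclicity and weak-read-coherence; with $\mathsf{RA}$: porf-acyclicity, write-coherence and read-coherence; with $\mathsf{SRA}$: porf-acyclicity, strong-write-coherence and read-coherence. *)

(* Defs.v *)
From mathcomp Require Import all_boot.
From Stdlib Require Import Relations.
Set Implicit Arguments. Unset Strict Implicit. Unset Printing Implicit Defensive.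

Inductive kind := Rd | Wr.

Record exec (E : finType) := Exec {
  tid  : E -> nat;
  knd  : E -> kind;
  loc  : E -> nat;
  vl   : E -> nat;
  po   : E -> E -> Prop;
  rf   : E -> E -> Prop;
  mo   : E -> E -> Prop }.

Section Defs.
Variable E : finType.
Variable X : exec E.

Definition isR (e : E) := knd X e = Rd.
Definition isW (e : E) := knd X e = Wr.

Definition wf_exec : Prop :=
  (forall a, ~ po X a a) /\
  (forall a b c, po X a b -> po X b c -> po X a c) /\
  (forall a b, tid X a = tid X b -> a <> b -> po X a b \/ po X b a) /\
  (forall a b, po X a b -> tid X a = tid X b) /\
  (forall w r, rf X w r ->
     isW w /\ isR r /\ loc X w = loc X r /\ vl X w = vl X r) /\
  (forall r, isR r -> exists! w, rf X w r) /\
  (* mo = union over x of mo_x, mo_x a strict total order on writes to x *)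
  (forall a b, mo X a b -> isW a /\ isW b /\ loc X a = loc X b) /\
  (forall a, ~ mo X a a) /\
  (forall a b c, mo X a b -> mo X b c -> mo X a c) /\
  (forall a b, isW a -> isW b -> loc X a = loc X b -> a <> b ->
     mo X a b \/ mo X b a).

Definition one_writer : Prop :=
  forall a b, isW a -> isW b -> loc X a = loc X b -> tid X a = tid X b.

Definition mo_agrees_po : Prop := forall a b, mo X a b -> po X a b.

Definition porf : relation E := fun a b => po X a b \/ rf X a b.
Definition hb : relation E := clos_trans E porf.

Definition porf_acyclic : Prop := forall a, ~ clos_trans E porf a a.

Definition write_coherence : Prop :=
  ~ exists w w', isW w /\ isW w' /\ loc X w = loc X w' /\
                 mo X w w' /\ hb w' w.

Definition strong_write_coherence : Prop :=
  forall a, ~ clos_trans E (fun x y => hb x y \/ mo X x y) a a.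

Definition read_coherence : Prop :=
  ~ exists r w w', isR r /\ isW w /\ isW w' /\
        loc X r = loc X w /\ loc X r = loc X w' /\
        rf X w r /\ mo X w w' /\ hb w' r.

Definition weak_read_coherence : Prop :=
  ~ exists r w w', isR r /\ isW w /\ isW w' /\
        loc X r = loc X w /\ loc X r = loc X w' /\
        rf X w r /\ hb w w' /\ hb w' r.
End Defs.

Inductive model := WRA | RA | SRA.

Definition consistent (M : model) (E : finType) (X : exec E) : Prop :=
  match M with
  | WRA => porf_acyclic X /\ weak_read_coherence X
  | RA  => porf_acyclic X /\ write_coherence X /\ read_coherence X
  | SRA => porf_acyclic X /\ strong_write_coherence X /\ read_coherence X
  end.

(* Main.v *)
Require Import Defs.
From mathcomp Require Import all_boot.
From Stdlib Require Import Relations.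

Lemma hb_trans (E : finType) (X : exec E) a b c : hb X a b -> hb X b c -> hb X a c.
Proof. intros; eapply t_trans; eauto. Qed.

Lemma po_hb (E : finType) (X : exec E) a b : po X a b -> hb X a b.
Proof. intros; apply t_step; left; auto. Qed.

Theorem lemma2 (E : finType) (X : exec E) :
  wf_exec X -> one_writer X ->
  forall M : model, (M = SRA \/ M = RA) ->
    (consistent M X <-> (mo_agrees_po X /\ consistent WRA X)).
Proof.
  intros [Hirr [Htr [Htot [Htid [Hrf [Hrf1 [Hmo [Hmoirr [Hmotr Hmotot]]]]]]]]] Hone M HM.
  assert (Fwd : porf_acyclic X -> (forall w w', mo X w w' -> hb X w' w -> False) ->
                read_coherence X -> mo_agrees_po X /\ consistent WRA X).
  { intros Hac Hwc Hrc. split.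
    - intros a b Hab. destruct (Hmo _ _ Hab) as [Wa [Wb La]].
      assert (a <> b) by (intro; subst; eapply Hmoirr; eauto).
      destruct (Htot a b (Hone _ _ Wa Wb La) H) as [|Hba]; auto.
      exfalso; eapply Hwc; eauto using po_hb.
    - split; auto. intros [r [w [w' [Rr [Ww [Ww' [L1 [L2 [Hwr [H1 H2]]]]]]]]]].
      assert (w <> w') by (intro; subst; eapply Hac; eauto).
      destruct (Hmotot w w' Ww Ww' ltac:(congruence) H) as [Hm|Hm].
      + apply Hrc. exists r, w, w'; repeat split; auto.
      + eapply Hwc; eauto. }
  assert (Bwd : mo_agrees_po X -> consistent WRA X ->
                porf_acyclic X /\ strong_write_coherence X /\ read_coherence X).
  { intros Hag [Hac Hwrc]. split; [auto|split].
    - intros a Hc.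
      assert (K : forall x y, clos_trans E (fun x y => hb X x y \/ mo X x y) x y -> hb X x y).
      { intros x y Hxy; induction Hxy as [x y [H|H]| x y z _ IH1 _ IH2]; auto.
        apply po_hb; auto. eapply hb_trans; eauto. }
      eapply Hac; apply (K _ _ Hc).
    - intros [r [w [w' [Rr [Ww [Ww' [L1 [L2 [Hwr [H1 H2]]]]]]]]]].
      apply Hwrc. exists r, w, w'; repeat split; auto. apply po_hb; auto. }
  destruct HM; subst M; simpl; split.
  - intros [Hac [Hswc Hrc]]. apply Fwd; auto.
    intros w w' H1 H2. apply (Hswc w). eapply t_trans; apply t_step; [right|left]; eauto.
  - intros [Hag Hw]. apply Bwd; auto.
  - intros [Hac [Hwc Hrc]]. apply Fwd; auto.
    intros w w' H1 H2. apply Hwc. destruct (Hmo _ _ H1) as [? [? ?]].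
    exists w, w'; repeat split; auto.
  - intros [Hag Hw]. destruct (Bwd Hag Hw) as [Hac [Hswc Hrc]]. split; [auto|split; auto].
    intros [w [w' [_ [_ [_ [H1 H2]]]]]]. apply (Hswc w).
    eapply t_trans; apply t_step; [right|left]; eauto.
Qed.
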